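(* Let $(a_n)_{n\ge0}$ and $(a'_n)_{n\ge0}$ be sequences of positive real numbers and $(b_n)_{n\ge0}$ a sequence of real numbers such that, for all sufficiently large $n$: (i) $\frac{a'_{n+1}}{a'_n}\leq\frac{a_{n+1}}{a_n}$; (ii) $a_n\leq a'_n+b_n$; and (iii) $\frac{b_n}{a'_n}<R$ for some fixed real number $R$. Then there exists a strictly increasing sequence of natural numbers $(n_i)_{i\ge0}$ such that \[\lim_{i\to\infty}\frac{a_{n_i+1}/a_{n_i}}{a'_{n_i+1}/a'_{n_i}}=1.\] *)

(* Defs.v *)
From Stdlib Require Import Reals.
Open Scope R_scope.

(* Main.v *)
Require Import Defs.
From Stdlib Require Import Reals Lra Lia.
Open Scope R_scope.

Theorem mainTheorem3 (a a' b : nat -> R)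
  (ha : forall n, 0 < a n) (ha' : forall n, 0 < a' n)
  (hev : exists (R0 : R) (N : nat), forall n, (N <= n)%nat ->
      a' (S n) / a' n <= a (S n) / a n /\
      a n <= a' n + b n /\
      b n / a' n < R0) :
  exists ni : nat -> nat,
    (forall i, (ni i < ni (S i))%nat) /\
    Un_cv (fun i => (a (S (ni i)) / a (ni i)) / (a' (S (ni i)) / a' (ni i))) 1.
Proof.
  destruct hev as [R0 [N H]].
  set (u := fun i => a (N + i)%nat / a' (N + i)%nat).
  assert (upos : forall i, 0 < u i).
  { intro i; unfold u; apply Rdiv_lt_0_compat; auto. }
  assert (ugrow : Un_growing u).
  { intro i. unfold u. destruct (H (N + i)%nat ltac:(lia)) as [H1 _].
    replace (N + S i)%nat with (S (N + i)) by lia.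
    set (n := (N + i)%nat) in *.
    pose proof (ha n); pose proof (ha (S n)); pose proof (ha' n); pose proof (ha' (S n)).
    assert (K : a' (S n) / a' n * (a n * a' n) <= a (S n) / a n * (a n * a' n)).
    { apply Rmult_le_compat_r; [nra | exact H1]. }
    replace (a' (S n) / a' n * (a n * a' n)) with (a' (S n) * a n) in K by (field; lra).
    replace (a (S n) / a n * (a n * a' n)) with (a (S n) * a' n) in K by (field; lra).
    apply Rmult_le_reg_r with (a' n * a' (S n)); [nra|].
    replace (a n / a' n * (a' n * a' (S n))) with (a n * a' (S n)) by (field; lra).
    replace (a (S n) / a' (S n) * (a' n * a' (S n))) with (a (S n) * a' n) by (field; lra).
    lra. }
  assert (ubnd : bound (EUn u)).
  { exists (1 + R0). intros x [i ->]. unfold u.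
    destruct (H (N + i)%nat ltac:(lia)) as [_ [H2 H3]].
    set (n := (N + i)%nat) in *. pose proof (ha' n).
    assert (Hq : a n / a' n <= (a' n + b n) / a' n).
    { unfold Rdiv; apply Rmult_le_compat_r; [left; apply Rinv_0_lt_compat; lra| lra]. }
    replace ((a' n + b n) / a' n) with (1 + b n / a' n) in Hq by (field; lra).
    lra. }
  destruct (growing_cv u ugrow ubnd) as [l Hl].
  assert (uge : forall i, u 0%nat <= u i).
  { induction i; [lra| pose proof (ugrow i); lra]. }
  exists (fun i => (N + i)%nat). split; [intro; lia|].
  intros eps Heps.
  pose proof (upos 0%nat) as u0.
  destruct (Hl (eps * u 0%nat / 2)) as [N1 HN1].
  { apply Rdiv_lt_0_compat; nra. }
  exists N1. intros n Hn.
  assert (E : a (S (N + n)) / a (N + n)%nat / (a' (S (N + n)) / a' (N + n)%nat)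
              = u (S n) / u n).
  { unfold u. replace (N + S n)%nat with (S (N + n)) by lia.
    pose proof (ha (N+n)%nat); pose proof (ha (S (N+n))); pose proof (ha' (N+n)%nat);
    pose proof (ha' (S (N+n))). field; repeat split; lra. }
  unfold R_dist. rewrite E.
  pose proof (HN1 n Hn) as A1. pose proof (HN1 (S n) ltac:(lia)) as A2.
  unfold R_dist in A1, A2.
  pose proof (upos n). pose proof (uge n).
  replace (u (S n) / u n - 1) with ((u (S n) - u n) / u n) by (field; lra).
  unfold Rdiv. rewrite Rabs_mult, Rabs_inv, (Rabs_right (u n)) by lra.
  apply Rmult_lt_reg_r with (u n); [lra|].
  rewrite Rmult_assoc, Rinv_l, Rmult_1_r by lra.
  assert (Rabs (u (S n) - u n) < eps * u 0%nat).
  { replace (u (S n) - u n) with ((u (S n) - l) - (u n - l)) by ring.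
    unfold Rminus at 1. eapply Rle_lt_trans; [apply Rabs_triang|].
    rewrite Rabs_Ropp. lra. }
  nra.
Qed.
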